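(* Let $q>3$ be an odd prime power, let $f(x)=x^2$ on $\mathbb F_{q^2}$, and let $\theta\in\mathbb F_{q^2}^*$ be such that $\theta^{q+1}$ is a nonsquare in $\mathbb F_q$. Then in the unital $\mathcal U_\theta:=\{(x,t\theta):x\in\mathbb F_{q^2},t\in\mathbb F_q\}\cup\{(\infty)\}$ of $\Pi(f)$, the point $(\infty)$ is the unique vertex of Wilbrink's condition II in strong form.
   Context: $\Pi(f)$ for $f(x)=x^2$ is the projective plane with points $(x,y)\in\mathbb F_{q^2}^2$ and $(a)$ for $a\in\mathbb F_{q^2}\cup\{\infty\}$, lines $L_{a,b}=\{(x,f(x+a)-b):x\in\mathbb F_{q^2}\}\cup\{(a)\}$, $N_a=\{(a,y):y\in\mathbb F_{q^2}\}\cup\{(\infty)\}$ ($a,b\in\mathbb F_{q^2}$), $L_\infty=\{(a):a\in\mathbb F_{q^2}\cup\{\infty\}\}$. A unital (set of $q^3+1$ points meeting every line in $1$ or $q+1$ points) is regarded as a design whose blocks are its intersections with lines meeting it in $q+1$ points. A point $v$ of the unital is a vertex of Wilbrink's condition II in strong form if for every block $B$ with $v\notin B$, every block $C$ with $v\in C$ meeting $B$, and every point $w\in C$ distinct from $v$ and from the point of $B\cap C$, there exists a block $B'\neq C$ with $w\in B'$ such that $B'$ meets every block that contains $v$ and meets $B$. *)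

(* Defs.v *)
From HB Require Import structures.
From mathcomp Require Import all_boot all_order all_algebra all_field.
Set Implicit Arguments. Unset Strict Implicit. Unset Printing Implicit Defensive.
Import GRing.Theory.
Local Open Scope ring_scope.

Section Plane.
Variable F : finFieldType.

(* Points of Pi(f): affine points (x,y) = inl (x,y); (a) = inr (Some a);
   (infinity) = inr None. *)
Definition point := ((F * F) + option F)%type.

(* Lines: L_{a,b} = inl (inl (a,b)); N_a = inl (inr a); L_infinity = inr tt. *)
Definition line := ((F * F + F) + unit)%type.

Definition aff (x y : F) : point := inl (x, y).
Definition pinf (a : option F) : point := inr a.

Definition incident (f : F -> F) (l : line) (p : point) : bool :=
  match l, p with
  | inl (inl (a, b)), inl (x, y) => y == f (x + a) - b
  | inl (inl (a, b)), inr (Some a') => a' == a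
  | inl (inl _), inr None => false
  | inl (inr a), inl (x, _) => x == a
  | inl (inr _), inr (Some _) => false
  | inl (inr _), inr None => true
  | inr _, inl _ => false
  | inr _, inr _ => true
  end.

Definition pts (f : F -> F) (l : line) : {set point} :=
  [set p | incident f l p].

Definition is_block (f : F -> F) (q : nat) (U : {set point}) (B : {set point}) :=
  exists l : line, B = U :&: pts f l /\ #|U :&: pts f l| = q.+1.

Definition meets (B C : {set point}) : Prop := B :&: C != set0.

Definition strong_II_vertex (f : F -> F) (q : nat) (U : {set point})
    (v : point) : Prop :=
  v \in U /\
  forall B C : {set point},
    is_block f q U B -> v \notin B ->
    is_block f q U C -> v \in C -> meets B C ->
    forall w : point, w \in C -> w != v -> w \notin B :&: C ->
    exists B' : {set point},
      [/\ is_block f q U B', B' != C, w \in B' &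
        forall D : {set point}, is_block f q U D -> v \in D -> meets D B ->
          meets B' D].

Definition U_theta (q : nat) (theta : F) : {set point} :=
  [set p : point | match p with
     | inl (x, y) => [exists t : F, (t ^+ q == t) && (y == t * theta)]
     | inr None => true
     | inr (Some _) => false
     end].

End Plane.

Definition prime_power (q : nat) : Prop :=
  exists p k : nat, [/\ prime p, (0 < k)%N & q = (p ^ k)%N].

(* Main.v *)
Require Import Defs.
From HB Require Import structures.
From mathcomp Require Import all_boot all_order all_algebra all_field.
From mathcomp Require Import ring zify.
Set Implicit Arguments. Unset Strict Implicit. Unset Printing Implicit Defensive.
Import GRing.Theory.
Local Open Scope ring_scope.

Section Basics.
Variables (q : nat) (F : finFieldType) (theta : F).
Hypotheses (pp : prime_power q) (oq : odd q) (q3 : (3 < q)%N)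
  (cardF : #|F| = (q ^ 2)%N) (th0 : theta != 0)
  (nsq : ~ (exists s : F, s ^+ q = s /\ s ^+ 2 = theta ^+ q.+1)).

Lemma charq : exists p, [/\ prime p, odd p, p \in [char F] & [char F].-nat q].
Proof.
case: pp => p [k [prp k0 qe]].
have pc : p \in [char F].
  by apply: (@card_finPcharP F p (k * 2) _ prp); rewrite cardF qe -expnM.
exists p; split => //.
  by move: oq; rewrite qe oddX; case/orP => // /eqP k00; rewrite k00 in k0.
by rewrite qe (eq_pnat _ (pcharf_eq pc)) pnatX pnat_id.
Qed.

Lemma frobD (x y : F) : (x + y) ^+ q = x ^+ q + y ^+ q.
Proof. by case: charq => p [_ _ _ h]; rewrite exprDn_pchar. Qed.
Lemma frobN (x : F) : (- x) ^+ q = - x ^+ q.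
Proof. by case: charq => p [_ _ _ h]; rewrite exprNn_pchar. Qed.
Lemma frobB (x y : F) : (x - y) ^+ q = x ^+ q - y ^+ q.
Proof. by rewrite frobD frobN. Qed.
Lemma frobV (x : F) : (x ^-1) ^+ q = (x ^+ q) ^-1.
Proof. by rewrite exprVn. Qed.
Lemma frob_nat n : (n%:R : F) ^+ q = n%:R.
Proof. by elim: n => [|n IH]; rewrite ?expr0n ?(gtn_eqF (ltnW (ltnW (ltnW q3)))) // -addn1 natrD frobD IH expr1n. Qed.
Lemma frob2 (x : F) : (x ^+ q) ^+ q = x.
Proof. by rewrite -exprM mulnn -cardF expf_card. Qed.

Definition Qm (t : F) := t ^+ q == t.
Definition kap (z : F) := z * theta ^+ q - z ^+ q * theta.
Definition Nt := theta * theta ^+ q.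

Lemma Q0 : Qm 0. Proof. by rewrite /Qm expr0n (gtn_eqF (ltnW (ltnW (ltnW q3)))). Qed.
Lemma Q1 : Qm 1. Proof. by rewrite /Qm expr1n. Qed.
Lemma QD a b : Qm a -> Qm b -> Qm (a + b).
Proof. by rewrite /Qm frobD => /eqP -> /eqP ->. Qed.
Lemma QN a : Qm a -> Qm (- a).
Proof. by rewrite /Qm frobN => /eqP ->. Qed.
Lemma QB a b : Qm a -> Qm b -> Qm (a - b).
Proof. by move=> ha hb; apply: QD => //; apply: QN. Qed.
Lemma QM a b : Qm a -> Qm b -> Qm (a * b).
Proof. by rewrite /Qm exprMn => /eqP -> /eqP ->. Qed.
Lemma QV a : Qm a -> Qm (a ^-1).
Proof. by rewrite /Qm frobV => /eqP ->. Qed.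
Lemma Qdiv a b : Qm a -> Qm b -> Qm (a / b).
Proof. by move=> ha hb; apply: QM => //; apply: QV. Qed.
Lemma Qnat n : Qm n%:R.
Proof. by rewrite /Qm frob_nat. Qed.
Lemma QNt : Qm Nt.
Proof. by rewrite /Qm /Nt exprMn frob2 mulrC. Qed.

Lemma thetaNQ : ~~ Qm theta.
Proof.
apply/negP => /eqP h; apply: nsq; exists theta; split => //.
by rewrite [RHS]exprS h expr2.
Qed.

Lemma lin0 a b : Qm a -> Qm b -> theta * a = b -> a = 0.
Proof.
move=> ha hb e; apply/eqP; apply/negPn/negP => a0.
have : Qm (b / a) by apply: Qdiv.
by rewrite -e mulfK // => h; move: thetaNQ; rewrite h.
Qed.

Lemma Nt_neq1 : Nt != 1.
Proof.
apply/negP => /eqP h; apply: nsq; exists 1; split; first by rewrite expr1n.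
by move: h; rewrite /Nt -exprS => ->; rewrite expr1n.
Qed.

Lemma Nt_neq0 : Nt != 0.
Proof. by rewrite /Nt mulf_neq0 // expf_neq0. Qed.

Lemma nsq2 x lam : Qm lam -> lam != 0 -> x ^+ 2 != lam * theta.
Proof.
move=> /eqP hl l0; apply/negP => /eqP e; apply: nsq.
exists (x ^+ q.+1 / lam); split.
  have hx : (x ^+ q.+1) ^+ q = x ^+ q.+1.
    by rewrite -exprM mulnC exprM exprS frob2 [RHS]exprS mulrC.
  by rewrite exprMn frobV hl hx.
rewrite expr_div_n -exprM mulnC exprM e exprMn.
have -> : lam ^+ q.+1 = lam ^+ 2 by rewrite exprS hl expr2.
by rewrite mulrC mulrA mulVf ?mul1r // expf_neq0.
Qed.

Lemma two_neq0 : (2%:R : F) != 0.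
Proof.
case: charq => p [prp op pc _]; apply/negP => /eqP h2.
have : 2 \in [char F] by rewrite inE /= h2 eqxx.
rewrite (pcharf_eq pc) inE => /eqP e; by rewrite -e in op.
Qed.

Lemma kapD x y : kap (x + y) = kap x + kap y.
Proof. rewrite /kap frobD; ring. Qed.
Lemma kapN x : kap (- x) = - kap x.
Proof. rewrite /kap frobN; ring. Qed.
Lemma kapB x y : kap (x - y) = kap x - kap y.
Proof. by rewrite kapD kapN. Qed.
Lemma kapZ t z : Qm t -> kap (t * z) = t * kap z.
Proof. move=> /eqP ht; rewrite /kap exprMn ht; ring. Qed.
Lemma kap0 : kap 0 = 0.
Proof. by rewrite -(mul0r 0) kapZ ?mul0r //; exact: Q0. Qed.
Lemma kap_theta : kap theta = 0.
Proof. by rewrite /kap mulrC subrr. Qed.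
Lemma kap_th g : kap (theta * g) = Nt * (g - g ^+ q).
Proof. rewrite /kap /Nt exprMn; ring. Qed.
Lemma kapq z : (kap z) ^+ q = - kap z.
Proof. rewrite /kap frobB !exprMn !frob2; ring. Qed.

Lemma kapE y : (kap y == 0) = [exists t : F, (t ^+ q == t) && (y == t * theta)].
Proof.
apply/eqP/existsP.
  move=> h; exists (y / theta); apply/andP; split; last by rewrite divfK.
  move: h; rewrite /kap => /eqP; rewrite subr_eq0 => /eqP h.
  rewrite expr_div_n; apply/eqP.
  apply: (mulIf (expf_neq0 q th0)); rewrite divfK ?expf_neq0 //.
  by rewrite mulrAC h mulfK.
case=> t /andP [ht /eqP ->].
by rewrite kapZ // kap_theta mulr0.
Qed.

Lemma rootcount (p : {poly F}) (S : {set F}) :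
  p != 0 -> (forall x, x \in S -> root p x) -> (#|S| < size p)%N.
Proof.
move=> p0 hS; rewrite cardE; apply: max_poly_roots => //; last exact: enum_uniq.
by apply/allP => x; rewrite mem_enum; apply: hS.
Qed.

Definition Qs := [set t : F | Qm t].

Lemma QNm x : Qm (x ^+ q.+1).
Proof. by rewrite /Qm -exprM mulnC exprM exprS frob2 [X in _ == X]exprS mulrC. Qed.

Lemma Qcard : #|Qs| = q.
Proof.
have q0 : (0 < q)%N by apply: leq_trans q3.
have q1 : (0 < q.-1)%N by rewrite -subn1 subn_gt0 (ltn_trans _ q3).
have z0 : 0 \in Qs by rewrite inE Q0.
rewrite (cardsD1 0) z0 /=.
set Q' := Qs :\ 0.
have up : (#|Q'| <= q.-1)%N.
  have := @rootcount ('X^(q.-1) - 1) Q'.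
  rewrite size_XnsubC // ltnS; apply.
    by rewrite -size_poly_eq0 size_XnsubC.
  move=> x; rewrite !inE => /andP [x0 /eqP hx].
  rewrite rootE !hornerE subr_eq0; apply/eqP.
  apply: (mulIf x0); rewrite mul1r -exprSr prednK //.
have lo : (q.-1 <= #|Q'|)%N.
  set A := [set x : F | x != 0].
  have cA : #|A| = (q ^ 2 - 1)%N.
    by rewrite -cardF subn1 -(cardC1 0); apply: eq_card => x; rewrite !inE.
  have : (#|A| <= #|Q'| * q.+1)%N.
    rewrite -sum1_card (partition_big (fun x => x ^+ q.+1) (mem Q')) /=.
      rewrite -sum_nat_const; apply: leq_sum => j; rewrite inE => /andP [j0 jQ].
      rewrite (eq_bigl (mem [set x in A | x ^+ q.+1 == j])); last by move=> x; rewrite !inE.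
      rewrite sum1_card.
      have := @rootcount ('X^(q.+1) - j%:P) [set x in A | x ^+ q.+1 == j].
      rewrite size_XnsubC // ltnS; apply.
        by rewrite -size_poly_eq0 size_XnsubC.
      move=> x; rewrite !inE => /andP [_ /eqP hx].
      by rewrite rootE !hornerE hx subrr.
    move=> x; rewrite !inE => x0; rewrite expf_neq0 //=; exact: QNm.
  rewrite cA => h; have : (q - 1 <= #|Q'|)%N by nia.
  by rewrite subn1.
have -> : #|Q'| = q.-1 by apply/eqP; rewrite eqn_leq up lo.
by rewrite add1n prednK.
Qed.

Definition Xset (m : F) := [set u : F | kap (u ^+ 2 + m * u) == 0].
Definition del := kap 1.

Lemma del_neq0 : del != 0.
Proof.
rewrite /del /kap mul1r expr1n mul1r subr_eq0.
exact: thetaNQ.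
Qed.

Lemma kapsq_neq0 z : z != 0 -> kap (z ^+ 2) != 0.
Proof.
move=> z0; apply/negP; rewrite kapE => /existsP [l /andP [hl /eqP e]].
have l0 : l != 0 by apply: contraNneq (expf_neq0 2 z0) => l0; rewrite e l0 mul0r.
by move: (@nsq2 z l hl l0); rewrite e eqxx.
Qed.

Lemma Qanti a b : a ^+ q = - a -> b ^+ q = - b -> Qm (a / b).
Proof. by move=> ha hb; rewrite /Qm exprMn frobV ha hb invrN mulrNN. Qed.

Section Param.
Variable m : F.
Hypothesis m0 : m != 0.

Definition zeta t := (1 + t * theta) / m.
Definition beta t := - (del / kap (zeta t ^+ 2)).
Definition rr t := beta t * zeta t.

Lemma onetheta_neq0 t : Qm t -> 1 + t * theta != 0.
Proof.
move=> ht; apply/negP => /eqP e.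
have e' : theta * t = -1 by rewrite mulrC; apply/eqP; rewrite -subr_eq0 opprK addrC e.
have t0 := lin0 ht (QN Q1) e'.
by move: e; rewrite t0 mul0r addr0 => /eqP; rewrite oner_eq0.
Qed.

Lemma zeta_neq0 t : Qm t -> zeta t != 0.
Proof. by move=> ht; rewrite /zeta mulf_neq0 ?invr_eq0 // onetheta_neq0. Qed.

Lemma Kt_neq0 t : Qm t -> kap (zeta t ^+ 2) != 0.
Proof. by move=> ht; apply: kapsq_neq0; apply: zeta_neq0. Qed.

Lemma beta_Q t : Qm t -> Qm (beta t).
Proof. by move=> ht; apply: QN; apply: Qanti; apply: kapq. Qed.

Lemma beta_neq0 t : Qm t -> beta t != 0.
Proof. by move=> ht; rewrite oppr_eq0 mulf_neq0 ?invr_eq0 ?del_neq0 ?Kt_neq0. Qed.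

Lemma kap_quad a t : Qm a -> Qm t ->
  kap ((a * zeta t) ^+ 2 + m * (a * zeta t)) = a * (a * kap (zeta t ^+ 2) + del).
Proof.
move=> ha ht.
have -> : (a * zeta t) ^+ 2 + m * (a * zeta t) = (a * a) * zeta t ^+ 2 + a * (1 + t * theta).
  rewrite /zeta; field; exact: m0.
rewrite (@kapD (a * a * zeta t ^+ 2)) (@kapZ (a * a)) ?QM // (@kapZ a) // (@kapD 1) (@kapZ t) // kap_theta mulr0 addr0 /del; ring.
Qed.

Lemma rr_in t : Qm t -> rr t \in Xset m.
Proof.
move=> ht; rewrite inE /rr kap_quad ?beta_Q //.
rewrite /beta; apply/eqP; field; exact: Kt_neq0.
Qed.

Lemma rr_neq0 t : Qm t -> rr t != 0.
Proof. by move=> ht; rewrite mulf_neq0 ?beta_neq0 ?zeta_neq0. Qed.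

Lemma rr_inj : {in Qs &, injective rr}.
Proof.
move=> t1 t2; rewrite !inE => h1 h2 e.
have e2 : theta * (beta t1 * t1 - beta t2 * t2) = beta t2 - beta t1.
  move: e; rewrite /rr /zeta => e.
  have : beta t1 * (1 + t1 * theta) = beta t2 * (1 + t2 * theta).
    by apply: (mulIf (invr_neq0 m0)); rewrite -!mulrA.
  move=> e'; apply/eqP; rewrite -subr_eq0; apply/eqP; rewrite -[RHS](subrr (beta t2 * (1 + t2 * theta))).
  rewrite -{1}e'; ring.
have h0 := lin0 (QB (QM (beta_Q h1) h1) (QM (beta_Q h2) h2)) (QB (beta_Q h2) (beta_Q h1)) e2.
move: e2; rewrite h0 mulr0 => /eqP; rewrite eq_sym subr_eq0 => /eqP eb.
move/eqP: h0; rewrite subr_eq0 eb => /eqP.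
by apply: mulfI; rewrite -eb beta_neq0.
Qed.

Lemma rr_surj x : x \in Xset m -> x != 0 -> exists2 t, Qm t & x = rr t.
Proof.
rewrite inE => /eqP hx x0.
set z := m * x.
set al := kap z / del.
have alQ : Qm al by apply: Qanti; apply: kapq.
have al0 : al != 0.
  rewrite mulf_neq0 ?invr_eq0 ?del_neq0 //; apply/negP => /eqP kz.
  move: hx; rewrite kapD -/z kz addr0 => /eqP; apply/negP; exact: kapsq_neq0.
have : kap (z / al - 1) == 0.
  rewrite kapB mulrC kapZ ?QV // -/del /al invf_div divfK ?subrr //.
  by apply: contraNneq al0 => kz; rewrite /al kz mul0r.
rewrite kapE => /existsP [t /andP [ht /eqP et]].
have ex : x = al * zeta t.
  rewrite /zeta -et /z; field; rewrite al0 andbT; exact: m0.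
exists t => //.
rewrite /rr ex; congr (_ * _).
move: hx; rewrite ex kap_quad // => /eqP; rewrite mulf_eq0 (negbTE al0) /= => /eqP h.
rewrite /beta; apply: (mulIf (Kt_neq0 ht)); rewrite mulNr divfK ?Kt_neq0 //.
by apply/eqP; rewrite -subr_eq0 opprK h.
Qed.

Lemma Xcard : #|Xset m| = q.+1.
Proof.
have -> : Xset m = 0 |: [set rr t | t in Qs].
  apply/setP => x; rewrite !inE; apply/idP/idP.
    move=> hx; case: (eqVneq x 0) => [->|x0]; first by [].
    have [t ht ->] := (@rr_surj x) ltac:(by rewrite inE) x0; apply/imsetP; by exists t; rewrite ?inE.
  case/orP => [/eqP ->|/imsetP [t ht ->]].
    by rewrite mulr0 expr0n addr0 kap0.
  by move: ht; rewrite inE => ht; move: (rr_in ht); rewrite inE.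
rewrite cardsU1 card_in_imset ?Qcard; last exact: rr_inj.
have -> : (0 \notin [set rr t | t in Qs]) = true.
  apply/negP => /imsetP [t ht e]; move: ht; rewrite inE => ht.
  by move: (rr_neq0 ht); rewrite -e eqxx.
by [].
Qed.
End Param.

Local Notation U := (U_theta q theta).
Local Notation f := (fun x : F => x ^+ 2).
Definition Ll (a b : F) : line F := inl (inl (a, b)).
Definition Nl (c : F) : line F := inl (inr c).

Lemma memUaff x y : (aff x y \in U) = (kap y == 0).
Proof. by rewrite inE kapE. Qed.

Lemma memL x y a b :
  (aff x y \in U :&: pts f (Ll a b)) = (kap y == 0) && (y == (x + a) ^+ 2 - b).
Proof. by rewrite !inE kapE. Qed.

Lemma memL_inf o a b : (pinf o \in U :&: pts f (Ll a b)) = false.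
Proof. by case: o => [a'|]; rewrite !inE //= andbF. Qed.

Lemma memN x y c : (aff x y \in U :&: pts f (Nl c)) = (kap y == 0) && (x == c).
Proof. by rewrite !inE kapE. Qed.

Lemma memN_inf c : pinf None \in U :&: pts f (Nl c).
Proof. by rewrite !inE. Qed.

Lemma memN_some a c : (pinf (Some a) \in U :&: pts f (Nl c)) = false.
Proof. by rewrite !inE. Qed.

Definition XS a b := [set x : F | kap ((x + a) ^+ 2 - b) == 0].

Lemma setUL a b : U :&: pts f (Ll a b) = [set aff x ((x + a) ^+ 2 - b) | x in XS a b].
Proof.
apply/setP => p; case: p => [[x y]|o]; last first.
  rewrite memL_inf; apply/esym/negP => /imsetP [x _ e]; by case: o e.
rewrite -/(aff x y) memL; apply/idP/imsetP.
  by case/andP => k /eqP e; exists x; rewrite ?inE -?e // e.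
by case=> x' hx [-> ->]; move: hx; rewrite inE => ->; rewrite eqxx.
Qed.

Lemma cardUL a b : #|U :&: pts f (Ll a b)| = #|XS a b|.
Proof. by rewrite setUL card_imset // => x1 x2 [->]. Qed.

Lemma cardUN c : #|U :&: pts f (Nl c)| = q.+1.
Proof.
have -> : U :&: pts f (Nl c) = pinf None |: [set aff c (t * theta) | t in Qs].
  apply/setP => p; case: p => [[x y]|[a|]]; last by rewrite memN_inf !inE eqxx.
    rewrite -/(aff x y) memN !inE /=; apply/andP/imsetP.
      case=> /eqP k /eqP ->; move/eqP: k; rewrite kapE => /existsP [t /andP [ht /eqP ->]].
      by exists t; rewrite ?inE.
    by case=> t; rewrite inE => ht [-> ->]; rewrite kapZ // kap_theta mulr0 eqxx.
  rewrite memN_some !inE /=; apply/esym/imsetP => [[t _ e]] //.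
rewrite cardsU1 card_imset ?Qcard; last by move=> t1 t2 [e]; apply: (mulIf th0).
suff -> : (pinf None \notin [set aff c (t * theta) | t in Qs]) = true by [].
by apply/negP => /imsetP [t _ e].
Qed.

Lemma setUinf : U :&: pts f (inr tt) = [set pinf None].
Proof. by apply/setP => p; case: p => [[x y]|[a|]]; rewrite !inE /= ?andbF. Qed.

Lemma XScard a b c : kap ((c + a) ^+ 2 - b) = 0 -> c + a != 0 -> #|XS a b| = q.+1.
Proof.
move=> hc ca.
set m := 2%:R * (c + a).
have m0 : m != 0 by rewrite mulf_neq0 // two_neq0.
have e x : (x + a) ^+ 2 - b = ((x - c) ^+ 2 + m * (x - c)) + ((c + a) ^+ 2 - b).
  rewrite /m; ring.
have -> : XS a b = [set c + u | u in Xset m].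
  apply/setP => x; rewrite inE; apply/idP/imsetP.
    rewrite e (@kapD ((x - c) ^+ 2 + m * (x - c))) hc addr0 => hx.
    by exists (x - c); rewrite ?inE // addrC subrK.
  case=> u; rewrite inE => hu ->.
  by rewrite e (@kapD ((c + u - c) ^+ 2 + m * (c + u - c))) hc addr0 (addrC c u) addrK.
by rewrite card_imset ?Xcard //; apply: addrI.
Qed.

Lemma block_cases B : is_block f q U B ->
  (exists a b, B = U :&: pts f (Ll a b) /\ #|XS a b| = q.+1) \/
  (exists c, B = U :&: pts f (Nl c)).
Proof.
case=> l [-> hc]; case: l hc => [[[a b]|c]|[]] hc.
- by left; exists a, b; rewrite -cardUL.
- by right; exists c.
- by move: hc q3; rewrite setUinf cards1 => -[<-].
Qed.

Lemma inf_block B : is_block f q U B -> pinf None \in B -> exists c, B = U :&: pts f (Nl c).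
Proof.
case/block_cases => [[a [b [-> _]]]|//]; by rewrite memL_inf.
Qed.

Lemma vertex_inf : strong_II_vertex f q U (pinf None).
Proof.
split; first by rewrite inE.
move=> B C hB vB hC vC meetBC w wC wv wBC.
case: (block_cases hB) => [[a [b [eB cB]]]|[c' eB]]; last by rewrite eB memN_inf in vB.
have [c eC] := inf_block hC vC.
move: w wC wv wBC => [[xw yw]|[a'|]]; rewrite ?eC ?memN_some //.
rewrite -/(aff xw yw) memN => /andP [kw /eqP ew] _ _; subst xw.
case/set0Pn: meetBC => p; rewrite inE => /andP [pB pC].
move: p pB pC => [[x1 y1]|o]; last by rewrite eB memL_inf.
rewrite -/(aff x1 y1) eB eC memL memN => /andP [k1 /eqP e1] /andP [_ /eqP ex1]; subst x1.
exists (U :&: pts f (Ll a (b + y1 - yw))); split.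
- exists (Ll a (b + y1 - yw)); split => //.
  rewrite cardUL -cB; apply: eq_card => x; rewrite !inE.
  have -> : (x + a) ^+ 2 - (b + y1 - yw) = ((x + a) ^+ 2 - b) - (y1 - yw) by ring.
  by rewrite (@kapB ((x + a) ^+ 2 - b)) (@kapB y1) (eqP k1) (eqP kw) subrr subr0.
- apply/negP => /eqP e; move: (memN_inf c); rewrite -e memL_inf; by [].
- rewrite -/(aff c yw) memL kw /= e1; apply/eqP; ring.
move=> D hD vD meetDB.
have [d eD] := inf_block hD vD.
case/set0Pn: meetDB => p; rewrite inE => /andP [pD pB].
move: p pD pB => [[x2 y2]|o]; last by rewrite memL_inf.
rewrite -/(aff x2 y2) eD memL memN => /andP [_ /eqP ex2] /andP [k2 /eqP e2]; subst x2.
apply/set0Pn; exists (aff d ((d + a) ^+ 2 - (b + y1 - yw))).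
rewrite inE memL memN eqxx !andbT /=.
have -> : (d + a) ^+ 2 - (b + y1 - yw) = y2 - (y1 - yw) by rewrite e2; ring.
rewrite (@kapB y2) (@kapB y1) (eqP k1) (eqP kw) (eqP k2) !subrr. by rewrite !eqxx.
Qed.

Definition Rq := theta ^+ q.
Definition two : F := 2%:R.
Definition w0 : F := - two^-1.
Definition w1 : F := - (1 - Nt) / (two * (1 + theta)).
Definition w2 : F := - (1 - Nt) / (two * (1 - theta)).
Definition mm (w : F) := two + theta * w.

Lemma NtE : Nt = theta * Rq. Proof. by []. Qed.
Lemma NtqE : Nt ^+ q = Nt. Proof. exact/eqP/QNt. Qed.
Lemma RqqE : Rq ^+ q = theta. Proof. exact: frob2. Qed.
Lemma two0 : two != 0. Proof. exact: two_neq0. Qed.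
Lemma twoq : two ^+ q = two. Proof. exact: frob_nat. Qed.

Lemma thm1 : theta != -1.
Proof. by apply/negP => /eqP h; move: thetaNQ; rewrite h (QN Q1). Qed.
Lemma thp1 : theta != 1.
Proof. by apply/negP => /eqP h; move: thetaNQ; rewrite h Q1. Qed.
Lemma onepth : 1 + theta != 0.
Proof. by rewrite addrC -(opprK 1) subr_eq0 thm1. Qed.
Lemma onemth : 1 - theta != 0.
Proof. by rewrite subr_eq0 eq_sym thp1. Qed.
Lemma onepR : 1 + Rq != 0.
Proof.
apply/negP => /eqP h; move: thm1; rewrite -RqqE.
have -> : Rq = -1 by apply/eqP; rewrite -subr_eq0 opprK addrC h.
by rewrite frobN expr1n eqxx.
Qed.
Lemma onemR : 1 - Rq != 0.
Proof.
apply/negP => /eqP h; move: thp1; rewrite -RqqE.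
have -> : Rq = 1 by apply/eqP; rewrite -subr_eq0 -oppr_eq0 opprB h.
by rewrite expr1n eqxx.
Qed.
Lemma onemN : 1 - Nt != 0.
Proof. by rewrite subr_eq0 eq_sym Nt_neq1. Qed.
Lemma thR : theta - Rq != 0.
Proof. by rewrite subr_eq0 eq_sym; exact: thetaNQ. Qed.

Lemma kap_thQ s : Qm s -> kap (theta * s) = 0.
Proof. by move=> hs; rewrite mulrC kapZ // kap_theta mulr0. Qed.

Lemma final_alg e : e != 0 -> kap (e ^+ 2 + mm w0 * e) = 0 ->
  kap (e ^+ 2 + mm w1 * e) = 0 -> kap (e ^+ 2 + mm w2 * e) = 0 -> False.
Proof.
move=> e0 k0 k1 k2.
have gq w : kap (e ^+ 2 + mm w * e) = 0 -> ((w - w0) * e) ^+ q = (w - w0) * e.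
  move=> kw.
  have : kap (theta * ((w - w0) * e)) = 0.
    have -> : theta * ((w - w0) * e) = (e ^+ 2 + mm w * e) - (e ^+ 2 + mm w0 * e).
      by rewrite /mm; ring.
    by rewrite (@kapB (e ^+ 2 + mm w * e)) kw k0 subrr.
  rewrite kap_th => /eqP; rewrite mulf_eq0 (negbTE Nt_neq0) /= subr_eq0 .
  by move/eqP/esym.
have g1 := gq _ k1; have g2 := gq _ k2.
have E1 : (w1 - w0) * e = e * (theta + Nt) / (two * (1 + theta)).
  rewrite /w1 /w0 NtE; field; rewrite two0 onepth //.
have E2 : (w2 - w0) * e = e * (Nt - theta) / (two * (1 - theta)).
  rewrite /w2 /w0 NtE; field; rewrite two0 onemth //.
rewrite E1 !exprMn !frobV !exprMn frobD twoq frobD NtqE expr1n -/Rq in g1.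
rewrite E2 !exprMn !frobV !exprMn frobB twoq frobB NtqE expr1n -/Rq in g2.
have h1 : e ^+ q * (Rq + Nt) * (1 + theta) = e * (theta + Nt) * (1 + Rq).
  transitivity (e ^+ q * (Rq + Nt) * (two * (1 + Rq))^-1 * (two * (1 + Rq) * (1 + theta))).
    field; rewrite two0 onepR //.
  rewrite g1; field; rewrite two0 onepth //.
have h2 : e ^+ q * (Nt - Rq) * (1 - theta) = e * (Nt - theta) * (1 - Rq).
  transitivity (e ^+ q * (Nt - Rq) * (two * (1 - Rq))^-1 * (two * (1 - Rq) * (1 - theta))).
    field; rewrite two0 onemR //.
  rewrite g2; field; rewrite two0 onemth //.
have key : e ^+ q * (4%:R * Nt * (Nt - 1) * (theta - Rq)) = 0.
  have -> : e ^+ q * (4%:R * Nt * (Nt - 1) * (theta - Rq)) =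
    (e ^+ q * (Rq + Nt) * (1 + theta)) * ((Nt - theta) * (1 - Rq)) -
    (e ^+ q * (Nt - Rq) * (1 - theta)) * ((theta + Nt) * (1 + Rq)).
    rewrite NtE; ring.
  rewrite h1 h2; ring.
have f4 : (4%:R : F) != 0 by rewrite (_ : 4%:R = two * two) ?mulf_neq0 ?two0 // /two -natrM.
have nz : e ^+ q * (4%:R * Nt * (Nt - 1) * (theta - Rq)) != 0.
  by rewrite !mulf_neq0 ?expf_neq0 ?Nt_neq0 ?thR // subr_eq0 Nt_neq1.
by rewrite key eqxx in nz.
Qed.

Lemma f4 : two * two != 0. Proof. by rewrite mulf_neq0 ?two0. Qed.
Lemma four0 : (4%:R : F) != 0.
Proof. by rewrite (_ : 4%:R = two * two) ?f4 // /two -natrM. Qed.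

Lemma w0_neq0 : w0 != 0. Proof. by rewrite oppr_eq0 invr_eq0 two0. Qed.
Lemma w1_neq0 : w1 != 0.
Proof. by rewrite /w1 mulNr oppr_eq0 mulf_neq0 ?invr_eq0 ?mulf_neq0 ?onemN ?two0 ?onepth. Qed.
Lemma w2_neq0 : w2 != 0.
Proof. by rewrite /w2 mulNr oppr_eq0 mulf_neq0 ?invr_eq0 ?mulf_neq0 ?onemN ?two0 ?onemth. Qed.

Lemma lin0' a b : Qm a -> Qm b -> theta * a = b -> b != 0 -> False.
Proof. move=> ha hb e b0; move: (lin0 ha hb e) => a0; by rewrite -e a0 mulr0 eqxx in b0. Qed.

Lemma mm0_neq0 : mm w0 != 0.
Proof.
apply/negP => /eqP h; apply: (@lin0' (- two^-1) (- two)).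
- exact: QN (QV (Qnat 2)).
- exact: QN (Qnat 2).
- by move: h; rewrite /mm /w0 => /eqP; rewrite addrC addr_eq0 => /eqP.
- by rewrite oppr_eq0 two0.
Qed.

Lemma mm1_neq0 : mm w1 != 0.
Proof.
apply/negP => /eqP h; apply: (@lin0' (3%:R + Nt) (- (two * two))).
- exact: QD (Qnat 3) QNt.
- by apply: QN; apply: QM; apply: Qnat.
- apply/eqP; rewrite -subr_eq0; apply/eqP.
  rewrite -(mul0r (two * (1 + theta))) -h /mm /w1 /two; field; rewrite -/two two0 onepth //.
- by rewrite oppr_eq0 f4.
Qed.

Lemma mm2_neq0 : mm w2 != 0.
Proof.
apply/negP => /eqP h; apply: (@lin0' (Nt - 5%:R) (- (two * two))).
- exact: QB QNt (Qnat 5).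
- by apply: QN; apply: QM; apply: Qnat.
- apply/eqP; rewrite -subr_eq0; apply/eqP.
  rewrite -(mul0r (two * (1 - theta))) -h /mm /w2 /two; field; rewrite -/two two0 onemth //.
- by rewrite oppr_eq0 f4.
Qed.

Lemma u0k : kap (w0^-1 ^+ 2 + two * w0^-1) = 0.
Proof. by rewrite /w0 invrN invrK (_ : (- two) ^+ 2 + two * - two = 0) ?kap0 //; ring. Qed.

Lemma u1k : kap (w1^-1 ^+ 2 + two * w1^-1) = 0.
Proof.
have -> : w1^-1 ^+ 2 + two * w1^-1 =
    theta * (two * two * (1 + theta) * (1 + Rq) / (1 - Nt) ^+ 2).
  rewrite /w1 NtE; field; rewrite -NtE two0 onepth ?oppr_eq0 onemN //.
rewrite kap_thQ // /Qm; apply/eqP.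
rewrite !exprMn frobV exprAC frobB expr1n NtqE twoq !frobD expr1n RqqE -/Rq; ring.
Qed.

Lemma u2k : kap (w2^-1 ^+ 2 + two * w2^-1) = 0.
Proof.
have -> : w2^-1 ^+ 2 + two * w2^-1 =
    theta * (two * two * (1 - theta) * (Rq - 1) / (1 - Nt) ^+ 2).
  rewrite /w2 NtE; field; rewrite -NtE two0 onemth ?oppr_eq0 onemN //.
rewrite kap_thQ // /Qm; apply/eqP.
rewrite !exprMn frobV exprAC !frobB !expr1n NtqE twoq RqqE -/Rq; ring.
Qed.

Lemma meet_NL d a b : meets (U :&: pts f (Nl d)) (U :&: pts f (Ll a b)) ->
  kap ((d + a) ^+ 2 - b) = 0.
Proof.
case/set0Pn => p; rewrite inE => /andP [pN pL].
move: p pN pL => [[x y]|o]; last by rewrite memL_inf.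
rewrite -/(aff x y) memN memL => /andP [_ /eqP ->] /andP [/eqP k /eqP e].
by rewrite -e.
Qed.

Lemma Dblock c y m u : kap y = 0 -> m != 0 -> u != 0 -> (m - two) * u = theta ->
  kap (u ^+ 2 + two * u) = 0 ->
  [/\ is_block f q U (U :&: pts f (Ll (m / two - c) (m ^+ 2 / (two * two) - y))),
      aff c y \in U :&: pts f (Ll (m / two - c) (m ^+ 2 / (two * two) - y)) &
      meets (U :&: pts f (Ll (m / two - c) (m ^+ 2 / (two * two) - y)))
            (U :&: pts f (Ll (1 - c) (1 - (y + theta))))].
Proof.
move=> ky m0 u0 hmu ku.
have ec : (c + (m / two - c)) ^+ 2 - (m ^+ 2 / (two * two) - y) = y.
  field; rewrite ?two0 ?f4 ?four0 //.
split.
- exists (Ll (m / two - c) (m ^+ 2 / (two * two) - y)); split => //.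
  rewrite cardUL (@XScard _ _ c); first by [].
    by rewrite ec.
  by rewrite addrC subrK mulf_neq0 ?invr_eq0 ?two0.
- by rewrite memL ky ec !eqxx.
apply/set0Pn; exists (aff (c + u) (u ^+ 2 + two * u + y + theta)).
have kk : kap (u ^+ 2 + two * u + y + theta) == 0.
  by rewrite (@kapD (u ^+ 2 + two * u + y)) (@kapD (u ^+ 2 + two * u)) ku ky kap_theta !addr0.
rewrite inE !memL kk /=; apply/andP; split; apply/eqP.
  rewrite -hmu; field; rewrite ?two0 ?f4 ?four0 //.
rewrite /two; ring.
Qed.

Lemma not_vertex c y : ~ strong_II_vertex f q U (aff c y).
Proof.
case=> vU H.
have ky : kap y = 0 by apply/eqP; rewrite -(@memUaff c).
have eB : (c + (1 - c)) ^+ 2 - (1 - (y + theta)) = y + theta by ring.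
have kB : kap (y + theta) = 0 by rewrite (@kapD y) ky kap_theta addr0.
have hB : is_block f q U (U :&: pts f (Ll (1 - c) (1 - (y + theta)))).
  exists (Ll (1 - c) (1 - (y + theta))); split => //.
  rewrite cardUL (@XScard _ _ c); first by [].
    by rewrite eB.
  by rewrite addrC subrK oner_neq0.
have vB : aff c y \notin U :&: pts f (Ll (1 - c) (1 - (y + theta))).
  rewrite memL eB; apply/negP => /andP [_ /eqP e].
  by move: th0; rewrite (_ : theta = 0) ?eqxx //; apply: (addrI y); rewrite -e addr0.
have hC : is_block f q U (U :&: pts f (Nl c)).
  by exists (Nl c); split => //; rewrite cardUN.
have vC : aff c y \in U :&: pts f (Nl c) by rewrite memN ky !eqxx.
have mBC : meets (U :&: pts f (Ll (1 - c) (1 - (y + theta)))) (U :&: pts f (Nl c)).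
  apply/set0Pn; exists (aff c (y + theta)).
  by rewrite inE memL memN eB kB !eqxx.
have wBC : pinf None \notin (U :&: pts f (Ll (1 - c) (1 - (y + theta)))) :&: (U :&: pts f (Nl c)).
  by rewrite inE memL_inf.
have [B' [hB' B'C wB' HD]] := H _ _ hB vB hC vC mBC (pinf None) (memN_inf c) isT wBC.
have [d eB'] := inf_block hB' wB'.
have dc : d - c != 0.
  rewrite subr_eq0; apply/negP => /eqP e; move: B'C; by rewrite eB' e eqxx.
have step w : w != 0 -> mm w != 0 -> kap (w^-1 ^+ 2 + two * w^-1) = 0 ->
    kap ((d - c) ^+ 2 + mm w * (d - c)) = 0.
  move=> w0' m0 kw.
  have hmu : (mm w - two) * w^-1 = theta by rewrite /mm (addrC two) addrK mulfK.
  have [hD vD mD] := @Dblock c y (mm w) (w^-1) ky m0 (invr_neq0 w0') hmu kw.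
  have := HD _ hD vD mD; rewrite eB' => /meet_NL.
  have -> : (d + (mm w / two - c)) ^+ 2 - (mm w ^+ 2 / (two * two) - y) =
     ((d - c) ^+ 2 + mm w * (d - c)) + y by field; rewrite ?two0 ?f4 ?four0 //.
  by rewrite (@kapD ((d - c) ^+ 2 + mm w * (d - c))) ky addr0.
apply: (final_alg dc).
- exact: step w0_neq0 mm0_neq0 u0k.
- exact: step w1_neq0 mm1_neq0 u1k.
- exact: step w2_neq0 mm2_neq0 u2k.
Qed.

Lemma main_sec v : strong_II_vertex f q U v <-> v = pinf None.
Proof.
split; last by move->; exact: vertex_inf.
case: v => [[x y]|[a|]] // h; first by case: (not_vertex h).
by case: h; rewrite inE.
Qed.
End Basics.

Unset Implicit Arguments.
Theorem theorem3p9 (q : nat) (F : finFieldType) (theta : F) :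
  prime_power q -> odd q -> (3 < q)%N -> #|F| = (q ^ 2)%N ->
  theta != 0 ->
  ~ (exists s : F, s ^+ q = s /\ s ^+ 2 = theta ^+ q.+1) ->
  forall v : point F,
    strong_II_vertex (fun x : F => x ^+ 2) q (U_theta q theta) v
    <-> v = pinf None.
Proof.
move=> pp oq q3 cF th0 nsq v.
exact: main_sec.
Qed.
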